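(* Let $U$ be a reduced $\mathbb{Z}_pG$-lattice, identified with $\ker f\subseteq F=\bigoplus_{i\in I}F_{(i)}$ as below. Then $$I_NU\subseteq U\cap\Big(\bigoplus_{H\neq N,\ |H|=p}F_{(H)}\Big),$$ with equality if and only if $U_N$ is a $\mathbb{Z}_p$-lattice (i.e. $\mathbb{Z}_p$-torsion free).
   Context: Let $p$ be a prime and $G=C_p\times C_p=N\times C$, where $N=\langle n\rangle$ and $C=\langle c\rangle$ are cyclic of order $p$. A $\mathbb{Z}_pG$-lattice is a $\mathbb{Z}_pG$-module free of finite rank over $\mathbb{Z}_p$. For $H\le G$ write $\widehat H=\sum_{h\in H}h$ and $I_H$ for the augmentation ideal of $\mathbb{Z}_pH$ (generated by the $1-h$, $h\in H$). For a module $U$, $U_N=U/I_NU$. Let $I=\{0\}\cup\{H\le G:|H|=p\}$. Put $e_0=\frac1{p^2}\widehat G$ and $e_H=\frac1{p^2}(p\widehat H-\widehat G)$ for $|H|=p$ (the primitive idempotents of $\mathbb{Q}_pG$). For $i\in I$, $\Lambda_{(i)}=e_i\mathbb{Z}_pG$, regarded both as a ring (quotient of $\mathbb{Z}_pG$ via $x\mapsto e_ix$) and as a module. A lattice is reduced if it has no direct summand isomorphic to $\mathbb{Z}_pG$ or to any $\Lambda_{(i)}$. A diagram is a tuple $(V;V_{(i)},\,i\in I)$ where $V$ is a finitely generated $\mathbb{F}_pG$-module, each $V_{(i)}$ is a submodule, $\sum_{i\neq j}V_{(i)}=V$ for every $j\in I$, and the action of $\mathbb{Z}_pG$ on each $V_{(i)}$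 factors through $\mathbb{Z}_pG\to\Lambda_{(i)}$. The diagram of a reduced lattice $U$: with $U\subseteq\mathbb{Q}_p\otimes U$, $U_{(i)}=e_iU$, $U_*=\bigoplus_iU_{(i)}$, set $V=U_*/U$, $V_{(i)}=(U_{(i)}+U)/U$. Conversely, from a diagram one forms $F_{(i)}$ = direct sum of $\dim_{\mathbb{F}_p}(V_{(i)}/\mathrm{Rad}\,V_{(i)})$ copies of $\Lambda_{(i)}$, $F=\bigoplus_{i\in I}F_{(i)}$, surjective $\Lambda_{(i)}$-homomorphisms $f_i:F_{(i)}\to V_{(i)}$ inducing isomorphisms $F_{(i)}/\mathrm{Rad}\,F_{(i)}\to V_{(i)}/\mathrm{Rad}\,V_{(i)}$, and $f=\sum_i f_i:F\to V$; the reduced lattice of the diagram is $\ker f$. These constructions are mutually inverse up to isomorphism. Hence for a reduced lattice $U$ with diagram $V_*$ we fix such $F,f$ and identify $U=\ker f\subseteq F$; for $x\in F$, $\overline{x}=f(x)\in V$, and elements of $F$ are written $x=\sum_i x_i$ with $x_i\in F_{(i)}$. *)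

(* Defs.v *)
From HB Require Import structures.
From mathcomp Require Import all_boot all_order all_algebra all_fingroup.
From mathcomp Require Import boolp.
Set Implicit Arguments. Unset Strict Implicit. Unset Printing Implicit Defensive.
Import GRing.Theory.
Local Open Scope ring_scope.

(* The ring Z_p of p-adic integers, as the inverse limit of Z/p^k Z:          *)
(* a p-adic integer is a sequence (x_k)_k of natural numbers with             *)
(*   x_k = x_(k+1) mod p^k   (so 0 <= x_k < p^k is the residue mod p^k).      *)
(* The base is q := maxn 2 p, which equals p for every prime p (this only    *)
(* serves to make padicInt a genuine ring for every value of the parameter).       *)

Definition zp_base (p : nat) : nat := maxn 2 p.
Definition zp_mod (p k : nat) : nat := (zp_base p ^ k)%N.

Record padicInt (p : nat) := MkZp {
  zp_val : nat -> nat ;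
  zp_valP : forall k, zp_val k = (zp_val k.+1 %% zp_mod p k)%N }.

HB.instance Definition _ p := gen_eqMixin (padicInt p).
HB.instance Definition _ p := gen_choiceMixin (padicInt p).

Section ZpRing.
Variable p : nat.
Local Notation m := (zp_mod p).

Lemma zp_mod_gt0 k : (0 < m k)%N.
Proof. by rewrite /zp_mod expn_gt0 /zp_base leq_max. Qed.

Lemma zp_mod_dvd k : (m k %| m k.+1)%N.
Proof. by rewrite /zp_mod expnS dvdn_mull. Qed.

Lemma zp_eq (x y : padicInt p) : zp_val x =1 zp_val y -> x = y.
Proof.
case: x => x Hx; case: y => y Hy /= /funext Exy; subst y.
by rewrite (Prop_irrelevance Hx Hy).
Qed.

Lemma zp_valK (x : padicInt p) k : (zp_val x k %% m k)%N = zp_val x k.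
Proof. by rewrite {1}zp_valP modn_mod -zp_valP. Qed.

Lemma zp_val_lt (x : padicInt p) k : (zp_val x k < m k)%N.
Proof. by rewrite -zp_valK ltn_pmod // zp_mod_gt0. Qed.

Lemma zp_cond (F : nat -> nat -> nat) (x y : padicInt p) :
  (forall d a b, (F a b %% d = F (a %% d) (b %% d) %% d)%N) ->
  forall k, ((F (zp_val x k) (zp_val y k)) %% m k =
     (F (zp_val x k.+1) (zp_val y k.+1) %% m k.+1) %% m k)%N.
Proof.
move=> HF k; rewrite modn_dvdm ?zp_mod_dvd // [in RHS]HF.
by rewrite -!zp_valP.
Qed.

Definition zp0 : padicInt p := @MkZp p (fun _ => 0%N) (fun k => esym (mod0n _)).

Lemma zp1_cond k : (1 %% m k = (1 %% m k.+1) %% m k)%N.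
Proof. by rewrite modn_dvdm // zp_mod_dvd. Qed.
Definition zp1 : padicInt p := @MkZp p (fun k => 1 %% m k)%N zp1_cond.

Definition zpadd (x y : padicInt p) : padicInt p :=
  @MkZp p (fun k => (zp_val x k + zp_val y k) %% m k)%N
          (zp_cond x y (fun d a b => esym (modnDm a b d))).

Definition zpmul (x y : padicInt p) : padicInt p :=
  @MkZp p (fun k => (zp_val x k * zp_val y k) %% m k)%N
          (zp_cond x y (fun d a b => esym (modnMm a b d))).

Lemma zpopp_cond (x : padicInt p) k :
  ((m k - zp_val x k) %% m k = ((m k.+1 - zp_val x k.+1) %% m k.+1) %% m k)%N.
Proof.
rewrite modn_dvdm ?zp_mod_dvd //.
have [d Hd] : exists d, m k.+1 = (d * m k)%N by apply/dvdnP; apply: zp_mod_dvd.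
have l1 := zp_val_lt x k.+1; have l0 := zp_val_lt x k.
apply/eqP; rewrite -(eqn_modDr (zp_val x k)) subnK 1?ltnW // modnn.
rewrite (zp_valP x k) modnDmr subnK 1?ltnW // Hd modnMl //.
Qed.
Definition zpopp (x : padicInt p) : padicInt p :=
  @MkZp p (fun k => (m k - zp_val x k) %% m k)%N (zpopp_cond x).

Lemma zpaddA : associative zpadd.
Proof. by move=> x y z; apply: zp_eq => k /=; rewrite modnDml modnDmr addnA. Qed.
Lemma zpaddC : commutative zpadd.
Proof. by move=> x y; apply: zp_eq => k /=; rewrite addnC. Qed.
Lemma zpadd0 : left_id zp0 zpadd.
Proof. by move=> x; apply: zp_eq => k /=; rewrite add0n zp_valK. Qed.
Lemma zpaddN : left_inverse zp0 zpopp zpadd.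
Proof.
move=> x; apply: zp_eq => k /=.
by rewrite modnDml subnK ?modnn // ltnW // zp_val_lt.
Qed.

HB.instance Definition _ := GRing.isZmodule.Build (padicInt p) zpaddA zpaddC zpadd0 zpaddN.

Lemma zpmulA : associative zpmul.
Proof. by move=> x y z; apply: zp_eq => k /=; rewrite modnMml modnMmr mulnA. Qed.
Lemma zpmulC : commutative zpmul.
Proof. by move=> x y; apply: zp_eq => k /=; rewrite mulnC. Qed.
Lemma zpmul1 : left_id zp1 zpmul.
Proof. by move=> x; apply: zp_eq => k /=; rewrite modnMml mul1n zp_valK. Qed.
Lemma zpmulD : left_distributive zpmul (+%R : padicInt p -> padicInt p -> padicInt p).
Proof.
move=> x y z; apply: zp_eq => k /=.
by rewrite modnMml mulnDl modnDm.
Qed.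
Lemma zp1_neq0 : zp1 != 0 :> padicInt p.
Proof.
apply/eqP => /(congr1 (fun x => zp_val x 1%N)) /=.
rewrite /zp_mod expn1 modn_small //.
by rewrite /zp_base leq_max.
Qed.

HB.instance Definition _ :=
  GRing.Zmodule_isComNzRing.Build (padicInt p) zpmulA zpmulC zpmul1 zpmulD zp1_neq0.

Definition zp_red (x : padicInt p) : 'F_p := (zp_val x 1%N)%:R.

End ZpRing.

(* Group algebra Z_p G, where G is the whole finite group gT.                *)
Section GroupAlgebra.
Variables (p : nat) (gT : finGroupType).

(* elements of Z_p G = Z_p-valued functions on G (a = sum_g a(g) g) *)
Definition ZpG := {ffun gT -> padicInt p}.

Definition gmul (a b : ZpG) : ZpG :=
  [ffun g => \sum_(h : gT) a h * b (h^-1 * g)%g].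

Definition gelt (g : gT) : ZpG := [ffun x => (x == g)%:R].

Definition ghat (H : {set gT}) : ZpG := [ffun x => (x \in H)%:R].

(* The index set I = {0} u {H <= G : |H| = p}: None stands for 0, Some H for H *)
Definition validI (i : option {group gT}) : bool :=
  if i is Some H then #|H| == p else true.

(* eps i = p^2 e_i, which lies in Z_p G:  eps 0 = \hat G,
   eps H = p \hat H - \hat G. *)
Definition eps (i : option {group gT}) : ZpG :=
  if i is Some H then [ffun x => p%:R * ghat H x - ghat [set: gT] x]
  else ghat [set: gT].

(* Lambda_(i) = e_i Z_pG, realized (via the Z_pG-isomorphism y |-> p^2 y,
   p^2 being a non-zero-divisor of Q_pG) as the ideal eps_i Z_pG of Z_pG. *)
Definition Lambda (i : option {group gT}) (y : ZpG) : Prop :=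
  exists z, y = gmul (eps i) z.

Definition kerLambda (i : option {group gT}) (a : ZpG) : Prop :=
  gmul (eps i) a = 0.

(* augmentation ideal I_H of Z_p H: generated (in Z_p H) by the 1 - h *)
Definition augI (H : {set gT}) (a : ZpG) : Prop :=
  exists b : gT -> ZpG, (forall h g, g \notin H -> b h g = 0) /\
    a = \sum_(h in H) gmul (b h) (gelt 1 - gelt h).

(* Jacobson radical of the local ring Z_p G: kernel of Z_pG -> F_p,
   a |-> (augmentation of a) mod p *)
Definition Jrad (a : ZpG) : Prop := zp_red (\sum_(g : gT) a g) = 0.

(* J indexes the cyclic summands of F; summand j is a copy of Lambda_(tau j);
   F_(i) is the sum of the summands j with tau j = i. *)
Variables (J : finType) (tau : J -> option {group gT}).

Definition FF := {ffun J -> ZpG}.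

Definition gact (a : ZpG) (x : FF) : FF := [ffun j => gmul a (x j)].

Definition zscale (r : padicInt p) (x : FF) : FF := [ffun j => [ffun g => r * x j g]].

Definition inF (x : FF) : Prop := forall j, Lambda (tau j) (x j).

Definition inFi (i : option {group gT}) (x : FF) : Prop :=
  inF x /\ forall j, tau j != i -> x j = 0.

Definition inFnonN (N : {set gT}) (x : FF) : Prop :=
  inF x /\ forall j, (if tau j is Some H then (H : {set gT}) == N else true) -> x j = 0.

Definition idealmul (A : ZpG -> Prop) (M : FF -> Prop) (x : FF) : Prop :=
  exists (k : nat) (a : 'I_k -> ZpG) (u : 'I_k -> FF),
    (forall t, A (a t) /\ M (u t)) /\ x = \sum_(t < k) gact (a t) (u t).

Definition RadF (i : option {group gT}) : FF -> Prop := idealmul Jrad (inFi i).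

Variables (V : vectType 'F_p) (rho : gT -> 'End(V)).

Definition is_rep : Prop :=
  rho 1%g = \1%VF /\ forall g h, rho (g * h)%g = (rho g \o rho h)%VF.

Definition Vact (a : ZpG) (v : V) : V := \sum_(g : gT) zp_red (a g) *: rho g v.

Definition RadV (W : {vspace V}) (v : V) : Prop :=
  exists (k : nat) (a : 'I_k -> ZpG) (w : 'I_k -> V),
    (forall t, Jrad (a t) /\ w t \in W) /\ v = \sum_(t < k) Vact (a t) (w t).

Definition is_diagram (Vi : option {group gT} -> {vspace V}) : Prop :=
  [/\ forall i, validI i -> forall g, (rho g @: Vi i <= Vi i)%VS,
      forall j, validI j ->
        (\sum_(i | validI i && (i != j)) Vi i)%VS = fullv
    & forall i, validI i -> forall a, kerLambda i a ->
        forall v, v \in Vi i -> Vact a v = 0].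

Definition is_diagram_cover (Vi : option {group gT} -> {vspace V})
    (f : FF -> V) : Prop :=
  [/\ forall x y, inF x -> inF y -> f (x + y) = f x + f y,
      forall a x, inF x -> f (gact a x) = Vact a (f x)
    & forall i, validI i ->
      [/\ forall x, inFi i x -> f x \in Vi i,
          forall v, v \in Vi i -> exists2 x, inFi i x & f x = v
        & forall x, inFi i x -> RadV (Vi i) (f x) -> RadF i x]].

End GroupAlgebra.

(* Main.v *)
Require Import Defs.
From HB Require Import structures.
From mathcomp Require Import all_boot all_order all_algebra all_fingroup.
From mathcomp Require Import boolp.
Import GRing.Theory.
Local Open Scope ring_scope.
Set Implicit Arguments. Unset Strict Implicit.
Section Zp.
Variable p : nat.
Hypothesis pr : prime p.

Lemma zp_valD (x y : padicInt p) k :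
  zp_val (x + y) k = ((zp_val x k + zp_val y k) %% zp_mod p k)%N.
Proof. by []. Qed.
Lemma zp_valM (x y : padicInt p) k :
  zp_val (x * y) k = ((zp_val x k * zp_val y k) %% zp_mod p k)%N.
Proof. by []. Qed.
Lemma zp_val0 k : zp_val (0 : padicInt p) k = 0%N.
Proof. by []. Qed.
Lemma zp_val1 k : zp_val (1 : padicInt p) k = (1 %% zp_mod p k)%N.
Proof. by []. Qed.

Lemma zp_natE (n : nat) k : zp_val (n%:R : padicInt p) k = (n %% zp_mod p k)%N.
Proof.
elim: n => [|n IH]; first by rewrite mulr0n zp_val0 mod0n.
by rewrite mulrS zp_valD zp_val1 IH modnDm.
Qed.

Lemma zp_baseE : zp_base p = p.
Proof. by rewrite /zp_base; apply/maxn_idPr; apply: prime_gt1. Qed.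

Lemma zp_modE k : zp_mod p k = (p ^ k)%N.
Proof. by rewrite /zp_mod zp_baseE. Qed.

Lemma p_neq0 : (p%:R : padicInt p) != 0.
Proof.
apply/eqP => /(congr1 (fun x => zp_val x 2)); rewrite zp_natE zp_val0 zp_modE.
have p1 := prime_gt1 pr.
rewrite modn_small; first by move=> E; rewrite E in p1.
by rewrite -[X in (X < _)%N]expn1 ltn_exp2l.
Qed.

Lemma zp_val_le (x : padicInt p) j k : (j <= k)%N ->
  zp_val x j = (zp_val x k %% p ^ j)%N.
Proof.
elim: k => [|k IH].
  by rewrite leqn0 => /eqP ->; rewrite -zp_modE zp_valK.
rewrite leq_eqVlt => /orP [/eqP->|]; first by rewrite -zp_modE zp_valK.
rewrite ltnS => jk; rewrite (IH jk) (zp_valP x k) zp_modE modn_dvdm //.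
by rewrite dvdn_Pexp2l ?prime_gt1 // ltnW.
Qed.

Lemma zp_nz (x : padicInt p) : x != 0 ->
  exists e, (forall k, (e <= k)%N -> (p ^ e %| zp_val x k)%N) /\
            (forall k, (e < k)%N -> ~~ (p ^ e.+1 %| zp_val x k)%N).
Proof.
move=> nz.
have ex : exists k, zp_val x k != 0%N.
  apply: contrapT => H; move/eqP: nz; apply; apply: zp_eq => k /=.
  apply/eqP/negPn/negP => Hk; apply: H; by exists k.
case: (ex_minnP ex) => d Hd Hmin.
case: d Hd Hmin => [|e] Hd Hmin.
  by move: (zp_val_lt x 0); rewrite zp_modE expn0 ltnS leqn0 (negPf Hd).
have He : zp_val x e = 0%N.
  apply/eqP; case E: (zp_val x e == 0%N) => //.
  by move: (Hmin e (negbT E)); rewrite ltnn.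
exists e; split=> k le.
  by rewrite /dvdn -zp_val_le // He.
by rewrite /dvdn -zp_val_le.
Qed.

Lemma zp_domain (r y : padicInt p) : r != 0 -> r * y = 0 -> y = 0.
Proof.
move=> nr ry; apply: contrapT => ny0; have ny : y != 0 by apply/eqP.
case: (zp_nz nr) => e [He1 He2]; case: (zp_nz ny) => e' [He1' He2'].
set K := (e + e').+1.
move/(congr1 (fun z => zp_val z K)): ry; rewrite zp_valM zp_val0 zp_modE.
have l1 : (e < K)%N by rewrite /K ltnS leq_addr.
have l2 : (e' < K)%N by rewrite /K ltnS leq_addl.
have p0 : (0 < p)%N by apply: prime_gt0.
case/dvdnP: (He1 K (ltnW l1)) => X HX; case/dvdnP: (He1' K (ltnW l2)) => Y HY.
have nX : ~~ (p %| X)%N.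
  apply: contra (He2 K l1) => /dvdnP [X1 EX]; rewrite HX EX expnS.
  by rewrite -mulnA dvdn_mull.
have nY : ~~ (p %| Y)%N.
  apply: contra (He2' K l2) => /dvdnP [Y1 EY]; rewrite HY EY expnS.
  by rewrite -mulnA dvdn_mull.
rewrite HX HY => /eqP; rewrite -/(dvdn _ _).
have -> : (X * p ^ e * (Y * p ^ e') = (X * Y) * p ^ (e + e'))%N.
  by rewrite expnD mulnACA.


rewrite /K expnS dvdn_pmul2r ?expn_gt0 ?p0 // Euclid_dvdM //.
by rewrite (negPf nX) (negPf nY).
Qed.
End Zp.
Section GA.
Variables (p : nat) (gT : finGroupType).
Local Notation A := (ZpG p gT).
Implicit Types a b y z : A.
Local Notation gelt := (@gelt p gT).

Lemma gmulE a b g : gmul a b g = \sum_h a h * b (h^-1 * g)%g.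
Proof. by rewrite ffunE. Qed.

Lemma gmulDl a b y : gmul (a + b) y = gmul a y + gmul b y.
Proof.
apply/ffunP => g; rewrite !ffunE -big_split; apply: eq_bigr => h _.
by rewrite !ffunE mulrDl.
Qed.
Lemma gmulDr a b y : gmul y (a + b) = gmul y a + gmul y b.
Proof.
apply/ffunP => g; rewrite !ffunE -big_split; apply: eq_bigr => h _.
by rewrite !ffunE mulrDr.
Qed.
Lemma gmul0l y : gmul 0 y = 0.
Proof. by apply/ffunP => g; rewrite !ffunE big1 // => h _; rewrite ffunE mul0r. Qed.
Lemma gmul0r y : gmul y 0 = 0.
Proof. by apply/ffunP => g; rewrite !ffunE big1 // => h _; rewrite ffunE mulr0. Qed.
Lemma gmulNl a y : gmul (- a) y = - gmul a y.
Proof.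
apply/ffunP => g; rewrite !ffunE -sumrN; apply: eq_bigr => h _.
by rewrite !ffunE mulNr.
Qed.
Lemma gmulBl a b y : gmul (a - b) y = gmul a y - gmul b y.
Proof. by rewrite gmulDl gmulNl. Qed.

Lemma gmul_suml (I : Type) (r : seq I) (P : pred I) (F : I -> A) y :
  gmul (\sum_(i <- r | P i) F i) y = \sum_(i <- r | P i) gmul (F i) y.
Proof. exact: (big_morph (fun a => gmul a y) (fun a b => gmulDl a b y) (gmul0l y)). Qed.

Lemma gmulA a b y : gmul (gmul a b) y = gmul a (gmul b y).
Proof.
apply/ffunP => g; rewrite !gmulE.
under eq_bigr => h _ do rewrite gmulE mulr_suml.
rewrite exchange_big /=; apply: eq_bigr => k _.
rewrite gmulE mulr_sumr (reindex_inj (mulgI k)) /=; apply: eq_bigr => m _.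
by rewrite mulKg invMg mulgA mulrA.
Qed.

Lemma gmulC (ab : forall x y : gT, commute x y) a b : gmul a b = gmul b a.
Proof.
apply/ffunP => g; rewrite !gmulE.
have inj : injective (fun k : gT => (k^-1 * g)%g).
  by move=> x1 x2 /mulIg /invg_inj.
rewrite (reindex_inj inj) /=; apply: eq_bigr => k _.
rewrite invMg invgK mulrC; congr (_ * _); congr (b _).
by rewrite (ab (g^-1)%g k) -mulgA mulVg mulg1.
Qed.

Lemma gmul_gelt x y : gmul (gelt x) y = [ffun g => y (x^-1 * g)%g].
Proof.
apply/ffunP => g; rewrite gmulE !ffunE (bigD1 x) //= ffunE eqxx mul1r.
by rewrite big1 ?addr0 // => h /negPf hx; rewrite ffunE hx mul0r.
Qed.

Lemma gmul1 y : gmul (gelt 1) y = y.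
Proof. by apply/ffunP => g; rewrite gmul_gelt ffunE invg1 mul1g. Qed.

Lemma gmul_inv h y : (forall g, y (h^-1 * g)%g = y g) ->
  gmul (gelt 1 - gelt h) y = 0.
Proof.
move=> Hy; apply/ffunP => g.
by rewrite gmulBl gmul1 gmul_gelt !ffunE Hy subrr.
Qed.

End GA.
Section GA2.
Variables (p : nat) (gT : finGroupType).
Local Notation A := (ZpG p gT).
Local Notation gelt := (@gelt p gT).
Local Notation ghat := (@ghat p gT).
Implicit Types a b y z : A.

Lemma ghat_inv (H : {group gT}) h g : h \in H -> ghat H (h^-1 * g)%g = ghat H g.
Proof. by move=> hH; rewrite !ffunE groupMl ?groupV. Qed.

Lemma eps_kill (N : {group gT}) (i : option {group gT}) h :
  (if i is Some H then (H : {set gT}) == N else true) -> h \in N ->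
  gmul (gelt 1 - gelt h) (eps p i) = 0.
Proof.
move=> Hi hN; apply: gmul_inv => g; case: i Hi => [H /eqP EH|_] /=.
  by rewrite !ffunE !in_setT EH groupMl ?groupV.
by rewrite !ffunE !in_setT.
Qed.

Lemma ghatE (N : {set gT}) y g :
  gmul (ghat N) y g = \sum_(h in N) y (h^-1 * g)%g.
Proof.
rewrite gmulE [RHS]big_mkcond /=; apply: eq_bigr => h _.
by rewrite ffunE; case: (h \in N); rewrite ?mul1r ?mul0r.
Qed.

Lemma gmul_aN (N : {group gT}) y :
  gmul (\sum_(h in N) gmul (gelt 1) (gelt 1 - gelt h)) y =
  [ffun g => y g *+ #|N|] - gmul (ghat N) y.
Proof.
rewrite (_ : gmul (ghat N) y = [ffun g => \sum_(h in N) y (h^-1 * g)%g]); last first.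
  by apply/ffunP => g; rewrite ghatE ffunE.
apply/ffunP => g; rewrite gmul_suml sum_ffunE !ffunE.
rewrite -sumr_const -sumrB; apply: eq_bigr => h _.
by rewrite gmul1 gmulBl gmul1 gmul_gelt !ffunE.
Qed.

Lemma ghatN_epsH (N H : {group gT}) : #|N| = p -> N :&: H = 1%g ->
  (N * H)%g = [set: gT] -> gmul (ghat N) (eps p (Some H)) = 0.
Proof.
move=> cN TI NH; apply/ffunP => g; rewrite ghatE ffunE.
have : g \in (N * H)%g by rewrite NH in_setT.
case/mulsgP => a b aN bH ->.
under eq_bigr => h _ do rewrite !ffunE in_setT.
rewrite sumrB sumr_const cN -mulr_sumr (bigD1 a) //= mulKg bH big1 ?addr0.
  by rewrite mulr1 subrr.
move=> h /andP [hN ha]; case E: (h^-1 * (a * b) \in H)%g => //.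
have : (h^-1 * a)%g \in N :&: H.
  rewrite inE groupM ?groupV //=.
  have -> : (h^-1 * a = h^-1 * (a * b) * b^-1)%g by rewrite mulgA mulgK.
  by rewrite groupM ?groupV.
rewrite TI => /set1gP E1; case/eqP: ha.
by rewrite -[a](mulKVg h) E1 mulg1.
Qed.

End GA2.

Section Main.
Variables (p : nat) (gT : finGroupType) (J : finType)
  (tau : J -> option {group gT}) (V : vectType 'F_p) (rho : gT -> 'End(V)).
Local Notation FF := (FF p gT J).
Local Notation gactF := (@Defs.gact p gT J).
Hypothesis ab : forall x y : gT, commute x y.

Lemma inF0 : inF tau (0 : FF).
Proof. by move=> j; exists 0; rewrite gmul0r ffunE. Qed.

Lemma inFD (x y : FF) : inF tau x -> inF tau y -> inF tau (x + y).
Proof.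
move=> Hx Hy j; case: (Hx j) => z1 E1; case: (Hy j) => z2 E2.
by exists (z1 + z2); rewrite ffunE gmulDr E1 E2.
Qed.

Lemma inF_gact a (x : FF) : inF tau x -> inF tau (gactF a x).
Proof.
move=> Hx j; case: (Hx j) => z E; exists (gmul a z).
by rewrite ffunE E -!gmulA (gmulC ab a).
Qed.

Lemma inF_sum k (u : 'I_k -> FF) : (forall t, inF tau (u t)) ->
  inF tau (\sum_(t < k) u t).
Proof. by move=> H; apply: (big_ind (inF tau)) => //; [apply: inF0|apply: inFD]. Qed.

Lemma Vact0 a : Vact rho a 0 = 0.
Proof. by rewrite /Vact big1 // => g _; rewrite linear0 scaler0. Qed.

Variables (f : FF -> V).
Hypothesis fD : forall x y, inF tau x -> inF tau y -> f (x + y) = f x + f y.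

Lemma f0 : f 0 = 0.
Proof.
have := fD inF0 inF0; rewrite addr0 => /(congr1 (fun v => v - f 0)).
by rewrite subrr addrK.
Qed.

Lemma f_sum k (u : 'I_k -> FF) : (forall t, inF tau (u t)) ->
  f (\sum_(t < k) u t) = \sum_(t < k) f (u t).
Proof.
elim: k u => [|k IH] u Hu; first by rewrite !big_ord0 f0.
rewrite !big_ord_recr /= fD ?IH //; last exact: inF_sum.
Qed.

End Main.

Theorem mainTheorem6 (p : nat) (gT : finGroupType) (n c : gT)
    (V : vectType 'F_p) (rho : gT -> 'End(V))
    (Vi : option {group gT} -> {vspace V})
    (J : finType) (tau : J -> option {group gT})
    (f : FF p gT J -> V) :
  prime p ->
  #[n]%g = p -> #[c]%g = p -> (<[n]> \x <[c]>)%g = [set: gT] ->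
  is_rep rho -> is_diagram rho Vi ->
  (forall j, validI p (tau j)) ->
  is_diagram_cover tau rho Vi f ->
  let U : FF p gT J -> Prop := fun x => inF tau x /\ f x = 0 in
  let INU : FF p gT J -> Prop := idealmul (@augI p gT <[n]>%g) U in
  (forall x, INU x -> U x /\ inFnonN tau <[n]>%g x) /\
  ((forall x, U x -> inFnonN tau <[n]>%g x -> INU x) <->
   (forall r : padicInt p, r != 0 -> forall u, U u -> INU (zscale r u) -> INU u)).
Proof.
move=> pr on oc dp rep diag valid [fD fact fcov] U INU.
have ab : forall x y : gT, commute x y.
  case/dprodP: dp => _ eNC cNC _.
  have : abelian [set: gT] by rewrite -eNC abelianM !cycle_abelian cNC.
  move=> /centsP Hc x y; exact: (Hc x (in_setT x) y (in_setT y)).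
have cN : #|<[n]>%g| = p by rewrite -on.
have cG : #|[set: gT]| = (p * p)%N by rewrite -(dprod_card dp); exact: (congr2 muln on oc).
have P1 : forall x, INU x -> U x /\ inFnonN tau <[n]>%g x.
  move=> x [k [a [u [Hau ->]]]].
  have HF : inF tau (\sum_(t < k) Defs.gact (a t) (u t)).
    by apply: inF_sum => t; apply: inF_gact => //; case: (Hau t) => _ [].
  split; first split => //.
    rewrite (f_sum fD); last by move=> t; apply: inF_gact => //; case: (Hau t) => _ [].
    apply: big1 => t _; case: (Hau t) => _ [Ht Hf].
    by rewrite fact // Hf Vact0.
  split => // j Hj; rewrite sum_ffunE; apply: big1 => t _; rewrite ffunE.
  case: (Hau t) => [[b [Hb ->]] [Ht _]]; case: (Ht j) => z ->.
  rewrite -gmulA gmul_suml big1 ?gmul0l // => h hN.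
  by rewrite gmulA (@eps_kill p gT <[n]>%G (tau j) h Hj hN) gmul0r.
split => //; split.
  move=> Heq r nr u Uu /P1 [_ [_ Hr]]; apply: Heq => //; split; first by case: Uu.
  move=> j Hj; move: (Hr j Hj) => /ffunP E; apply/ffunP => g.
  move: (E g); rewrite !ffunE => /(zp_domain pr nr) ->.
  by [].
move=> Htf x Ux [_ Hnon]; apply: (Htf _ (p_neq0 pr)) => //.
exists 1%N, (fun _ => \sum_(h in <[n]>%g) gmul (@gelt p gT 1) (gelt p 1 - gelt p h)),
  (fun _ => x); split.
  move=> _; split => //; exists (fun _ => @gelt p gT 1); split => //.
  move=> h g gN; rewrite ffunE; case: eqP => // E; case/negP: gN; rewrite E.
  exact: group1.
rewrite big_ord1; apply/ffunP => j; apply/ffunP => g; rewrite ffunE [in RHS]ffunE gmul_aN cN.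
have -> : gmul (ghat p <[n]>%g) (x j) = 0.
  case Ej: (tau j) (Hnon j) (valid j) => [H|] Hx vH; last by rewrite Hx // gmul0r.
  case HN: ((H : {set gT}) == <[n]>%g); first by rewrite Hx ?Ej ?gmul0r.
  case: Ux => [Hin _]; case: (Hin j) => z ->; rewrite Ej -gmulA.
  have TI : <[n]>%G :&: H = 1%g.
    apply: prime_TIg; first by rewrite cN.
    apply/negP => sub; move/negP: HN; apply.
    by rewrite eq_sym eqEcard sub cN (eqP vH) /=.
  rewrite (@ghatN_epsH p gT <[n]>%G H) ?gmul0l //.
  apply/eqP; rewrite eqEcard subsetT cG TI_cardMg // cN (eqP vH).
  by rewrite leqnn.
by rewrite subr0 !ffunE mulr_natl.
Qed.
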